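(* Let $(X,d)$ be a metric space with a distinguished point $o$, $p>0$, $\mathcal{F}$ a $p$-admissible sheaf of metrics on $X$, and $\rho_+:\mathbf{R}_+\to\mathbf{R}_+$ an increasing unbounded function. Let $\mathcal{A}$ be the set of finite subsets of $X$ containing $o$. Assume there is a function $T:\mathbf{R}_+\to\mathbf{R}_+$ such that for every $U\in\mathcal{A}$ and every $K>0$ there exists $\sigma\in\mathcal{F}(U)$ with $\sigma(x,y)\le\rho_+(d(x,y))$ for all $x,y\in U$ and $\sigma(x,y)\ge K$ for all $(x,y)\in\Delta_{T(K)}(U)$. Then $\mathcal{F}(X)$ contains a coarse metric.
   Context: A (pseudo-)metric on a set $\Omega$ is a function $\sigma:\Omega^2\to\mathbf{R}_+$ with $\sigma(x,y)=\sigma(y,x)$, $\sigma(x,y)\le\sigma(x,z)+\sigma(z,y)$, $\sigma(x,x)=0$. A sheaf of metrics $\mathcal{F}$ on a set $X$ assigns to each $\Omega\subseteq X$ a set $\mathcal{F}(\Omega)$ of metrics on $\Omega$, such that the restriction of any element of $\mathcal{F}(\Omega)$ to $\Omega'\subseteq\Omega$ belongs to $\mathcal{F}(\Omega')$. For $p>0$, $\mathcal{F}$ is $p$-admissible if for every $\Omega\subseteq X$: (i) $\{\sigma^p:\sigma\in\mathcal{F}(\Omega)\}$ is a convex cone of functions on $\Omega^2$ (for $\sigma_1,\sigma_2\in\mathcal{F}(\Omega)$ and $s,t\ge0$ there is $\sigma\in\mathcal{F}(\Omega)$ with $\sigma^p=s\sigma_1^p+t\sigma_2^p$); (ii) $\mathcal{F}(\Omega)$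 is closed under pointwise convergence; (iii) for every family $(U_i)$ of finite subsets of $\Omega$ with union $\Omega$, directed under inclusion, and every family $\sigma_i\in\mathcal{F}(U_i)$ with $\sigma_i=\sigma_j$ on $U_i\cap U_j$, there is $\sigma\in\mathcal{F}(\Omega)$ restricting to $\sigma_i$ on each $U_i$. A metric $\sigma$ on $X$ is coarse if there exist increasing unbounded $\rho_-,\rho_+':\mathbf{R}_+\to\mathbf{R}_+$ with $\rho_-(d(x,y))\le\sigma(x,y)\le\rho_+'(d(x,y))$ for all $x,y$. $\Delta_r(U)=\{(x,y)\in U^2:d(x,y)\ge r\}$. *)

(* Defs.v *)
From Stdlib Require Export Reals List.
Open Scope R_scope.

(* Subsets of X are predicates X -> Prop.  A metric on a subset Om is
   encoded as a total function X -> X -> R of which only the values on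
   Om x Om matter (see the extensionality axiom of sheaves below). *)

Definition subset {X : Type} (A B : X -> Prop) : Prop := forall x, A x -> B x.

Definition finite_set {X : Type} (U : X -> Prop) : Prop :=
  exists l : list X, forall x, U x -> In x l.

Definition is_metric {X : Type} (d : X -> X -> R) : Prop :=
  (forall x y, 0 <= d x y) /\
  (forall x y, d x y = d y x) /\
  (forall x y z, d x y <= d x z + d z y) /\
  (forall x y, d x y = 0 <-> x = y).

Definition is_pmetric_on {X : Type} (Om : X -> Prop) (s : X -> X -> R) : Prop :=
  (forall x y, Om x -> Om y -> 0 <= s x y) /\
  (forall x y, Om x -> Om y -> s x y = s y x) /\
  (forall x y z, Om x -> Om y -> Om z -> s x y <= s x z + s z y) /\
  (forall x, Om x -> s x x = 0).

(* x^p for x >= 0 and p > 0, with the convention 0^p = 0 *)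
Definition rpow (x p : R) : R := if Rle_dec x 0 then 0 else Rpower x p.

(* A sheaf of metrics on X: F Om s means "s (restricted to Om^2) belongs to F(Om)". *)
Definition sheaf_of_metrics {X : Type} (F : (X -> Prop) -> (X -> X -> R) -> Prop) : Prop :=
  (* encoding: membership depends only on the values on Om x Om *)
  (forall Om s s', F Om s -> (forall x y, Om x -> Om y -> s x y = s' x y) -> F Om s') /\
  (forall Om s, F Om s -> is_pmetric_on Om s) /\
  (forall Om Om' s, subset Om' Om -> F Om s -> F Om' s).

Definition p_admissible {X : Type} (p : R) (F : (X -> Prop) -> (X -> X -> R) -> Prop) : Prop :=
  (forall Om s1 s2 a b, F Om s1 -> F Om s2 -> 0 <= a -> 0 <= b ->
     exists s, F Om s /\
       forall x y, Om x -> Om y ->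
         rpow (s x y) p = a * rpow (s1 x y) p + b * rpow (s2 x y) p) /\
  (forall Om (sn : nat -> X -> X -> R) s,
     (forall n, F Om (sn n)) ->
     (forall x y, Om x -> Om y -> Un_cv (fun n => sn n x y) (s x y)) ->
     F Om s) /\
  (forall Om (I : Type) (U : I -> X -> Prop) (si : I -> X -> X -> R),
     inhabited I ->
     (forall i, finite_set (U i)) ->
     (forall i, subset (U i) Om) ->
     (forall x, Om x -> exists i, U i x) ->
     (forall i j, exists k, subset (U i) (U k) /\ subset (U j) (U k)) ->
     (forall i, F (U i) (si i)) ->
     (forall i j x y, U i x -> U j x -> U i y -> U j y -> si i x y = si j x y) ->
     exists s, F Om s /\ forall i x y, U i x -> U i y -> s x y = si i x y).

Definition incr_unbounded (f : R -> R) : Prop :=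
  (forall t, 0 <= t -> 0 <= f t) /\
  (forall s t, 0 <= s -> s <= t -> f s <= f t) /\
  (forall M, exists t, 0 <= t /\ M <= f t).

Definition coarse {X : Type} (d s : X -> X -> R) : Prop :=
  exists rm rp : R -> R, incr_unbounded rm /\ incr_unbounded rp /\
    forall x y, rm (d x y) <= s x y /\ s x y <= rp (d x y).

(* Main.v *)
Require Import Defs.
From Stdlib Require Import Reals List Lra Lia ZArith Classical ClassicalEpsilon FunctionalExtensionality PropExtensionality.

Section Zorn.
Variable Z : Type.
Variable Good : (Z -> Prop) -> Prop.
Variable B : Z -> Prop.
Hypothesis GoodB : Good B.
Definition bigU (C : (Z -> Prop) -> Prop) : Z -> Prop :=
  fun z => B z \/ exists F, C F /\ F z.
Hypothesis Good_union : forall C : (Z -> Prop) -> Prop,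
  (forall F, C F -> Good F) ->
  (forall F G, C F -> C G -> subset F G \/ subset G F) -> Good (bigU C).

Definition succP (F G : Z -> Prop) : Prop :=
  subset F G /\ (Good F -> Good G) /\
  ((exists G', Good G' /\ subset F G' /\ ~ subset G' F) -> Good G /\ ~ subset G F).

Definition succ (F : Z -> Prop) : Z -> Prop := epsilon (inhabits F) (succP F).

Lemma succ_spec F : succP F (succ F).
Proof.
  unfold succ. apply epsilon_spec.
  destruct (classic (exists G', Good G' /\ subset F G' /\ ~ subset G' F)) as [[G' [H1 [H2 H3]]]|Hn].
  - exists G'. split; [exact H2|split; [intros; exact H1|intros _; split; assumption]].
  - exists F. split; [intros z h; exact h|split; [intro h; exact h| intro h; contradiction]].
Qed.

Lemma succ_incl F : subset F (succ F).
Proof. apply succ_spec. Qed.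

Inductive tower : (Z -> Prop) -> Prop :=
| tw_succ : forall F, tower F -> tower (succ F)
| tw_union : forall C : (Z -> Prop) -> Prop, (forall F, C F -> tower F) -> tower (bigU C).

Lemma tower_B x : tower x -> subset B x.
Proof.
  induction 1.
  - intros z h. apply succ_incl. auto.
  - intros z h. left. exact h.
Qed.

Lemma set_ext (x y : Z -> Prop) : subset x y -> subset y x -> x = y.
Proof.
  intros h1 h2. apply functional_extensionality. intro z.
  apply propositional_extensionality. split; auto.
Qed.

Definition extreme (c : Z -> Prop) : Prop :=
  forall x, tower x -> subset x c -> ~ subset c x -> subset (succ x) c.

Lemma lemA c : tower c -> extreme c -> forall x, tower x -> subset x c \/ subset (succ c) x.
Proof.
  intros Tc Ec x Tx. induction Tx as [y Ty IH | C HC IH].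
  - destruct IH as [H|H].
    + destruct (classic (subset c y)) as [H'|H'].
      * right. rewrite (set_ext y c H H'). intros z h; exact h.
      * left. apply Ec; assumption.
    + right. intros z h. apply succ_incl. auto.
  - destruct (classic (exists F, C F /\ subset (succ c) F)) as [[F [h1 h2]]|Hn].
    + right. intros z h. right. exists F. auto.
    + left. intros z [h|[F [h1 h2]]].
      * apply (tower_B c Tc). exact h.
      * destruct (IH F h1) as [h|h]. auto.
        exfalso. apply Hn. exists F. auto.
Qed.

Lemma lemB c : tower c -> extreme c.
Proof.
  induction 1 as [y Ty IH | C HC IH].
  - intros x Tx h1 h2. destruct (lemA y Ty IH x Tx) as [h|h].
    + destruct (classic (subset y x)) as [h'|h'].
      * rewrite (set_ext x y h h'). intros z hz; exact hz.
      * intros z hz. apply succ_incl. apply (IH x Tx h h'). exact hz.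
    + contradiction.
  - intros x Tx h1 h2.
    destruct (not_all_ex_not _ _ h2) as [z hz].
    apply imply_to_and in hz. destruct hz as [hz1 hz2].
    destruct hz1 as [hb|[F [hF hFz]]].
    + exfalso. apply hz2. apply (tower_B x Tx). exact hb.
    + destruct (lemA F (HC F hF) (IH F hF) x Tx) as [h|h].
      * assert (Hs : subset (succ x) F).
        { apply (IH F hF x Tx h). intro hh. apply hz2. auto. }
        intros w hw. right. exists F. auto.
      * exfalso. apply hz2. apply h. apply succ_incl. exact hFz.
Qed.

Lemma tower_chain x c : tower x -> tower c -> subset x c \/ subset c x.
Proof.
  intros Tx Tc. destruct (lemA c Tc (lemB c Tc) x Tx) as [h|h]; auto.
  right. intros z hz. apply h. apply succ_incl. exact hz.
Qed.

Lemma tower_good x : tower x -> Good x.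
Proof.
  induction 1 as [y Ty IH | C HC IH].
  - destruct (succ_spec y) as [_ [h _]]. exact (h IH).
  - apply Good_union. exact IH. intros F G h1 h2. apply tower_chain; auto.
Qed.

Theorem zorn_max : exists M, Good M /\ subset B M /\ forall G, Good G -> subset M G -> subset G M.
Proof.
  set (M := bigU tower).
  assert (TM : tower M) by (apply tw_union; auto).
  exists M. split; [apply tower_good; exact TM|]. split; [apply tower_B; exact TM|].
  intros G GG HMG. apply NNPP. intro Hn.
  destruct (succ_spec M) as [_ [_ h3]].
  destruct h3 as [_ h4]. exists G. auto.
  apply h4. intros z hz. right. exists (succ M). split; [apply tw_succ; exact TM| exact hz].
Qed.
End Zorn.

Section Ultra.
Variable I : Type.
Variable le : I -> I -> Prop.
Variable i0 : I.
Hypothesis le_refl : forall i, le i i.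
Hypothesis dir : forall i1 i2, exists k, forall j, le k j -> le i1 j /\ le i2 j.

Definition tails (Q : I -> Prop) : Prop := exists i, forall j, le i j -> Q j.

Definition filt (Fl : (I -> Prop) -> Prop) : Prop :=
  (forall Q Q', Fl Q -> (forall j, Q j -> Q' j) -> Fl Q') /\
  (forall Q Q', Fl Q -> Fl Q' -> Fl (fun j => Q j /\ Q' j)) /\
  (forall Q, Fl Q -> exists j, Q j) /\
  (forall Q, tails Q -> Fl Q).

Lemma tails_filt : filt tails.
Proof.
  split; [|split; [|split]].
  - intros Q Q' [i h] h'. exists i. auto.
  - intros Q Q' [i h] [i' h']. destruct (dir i i') as [k hk]. exists k.
    intros j hj. destruct (hk j hj). auto.
  - intros Q [i h]. exists i. auto.
  - auto.
Qed.

Lemma union_filt : forall C : (I -> Prop) -> Prop -> Prop,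
  True -> True.
Proof. auto. Qed.

Theorem ultra_exists : exists Uf, filt Uf /\ forall Q, Uf Q \/ Uf (fun j => ~ Q j).
Proof.
  destruct (zorn_max (I -> Prop) filt tails) as [M [HM [HB Hmax]]].
  - intros C HC Hch. unfold bigU.
    split; [|split; [|split]].
    + intros Q Q' [h|[F [hF hQ]]] h'.
      * left. destruct tails_filt as [a _]. eauto.
      * right. exists F. split; auto. destruct (HC F hF) as [a _]. eauto.
    + intros Q Q' [h|[F [hF hQ]]] [h'|[G [hG hQ']]].
      * left. destruct tails_filt as [_ [a _]]. auto.
      * right. exists G. split; auto. destruct (HC G hG) as [_ [a [_ t]]]. auto.
      * right. exists F. split; auto. destruct (HC F hF) as [_ [a [_ t]]]. auto.
      * destruct (Hch F G hF hG) as [s|s].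
        -- right. exists G. split; auto. destruct (HC G hG) as [_ [a _]]. auto.
        -- right. exists F. split; auto. destruct (HC F hF) as [_ [a _]]. auto.
    + intros Q [h|[F [hF hQ]]].
      * destruct tails_filt as [_ [_ [a _]]]. auto.
      * destruct (HC F hF) as [_ [_ [a _]]]. auto.
    + intros Q h. left. exact h.
  - exists M. split; [exact HM|]. intros Q.
    destruct (classic (M Q)) as [h|h]; [left; exact h|right].
    apply NNPP. intro hn. apply h.
    set (G := fun R : I -> Prop => exists A, M A /\ forall j, A j -> Q j -> R j).
    destruct HM as [Mup [Mint [Mpr Mt]]].
    assert (GG : filt G).
    { split; [|split; [|split]].
      - intros R R' [A [hA hR]] h'. exists A. split; auto.
      - intros R R' [A [hA hR]] [A' [hA' hR']]. exists (fun j => A j /\ A' j).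
        split; auto. intros j [a a'] q. split; auto.
      - intros R [A [hA hR]]. apply NNPP. intro hne. apply hn.
        apply (Mup A); auto. intros j aj qj. apply hne. exists j. auto.
      - intros R hR. exists R. split; auto. }
    assert (HMG : subset M G).
    { intros R hR. exists R. split; auto. }
    apply (Hmax G GG HMG). exists (fun _ => True). split.
    + apply Mt. exists i0. auto.
    + auto.
Qed.
End Ultra.
Open Scope R_scope.

Section UL.
Variable I : Type.
Variable Uf : (I -> Prop) -> Prop.
Hypothesis Uup : forall Q Q', Uf Q -> (forall j, Q j -> Q' j) -> Uf Q'.
Hypothesis Uint : forall Q Q', Uf Q -> Uf Q' -> Uf (fun j => Q j /\ Q' j).
Hypothesis Upr : forall Q, Uf Q -> exists j, Q j.
Hypothesis Ufull : Uf (fun _ => True).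
Hypothesis Uultra : forall Q, Uf Q \/ Uf (fun j => ~ Q j).

Lemma Uf_all_list (A : Type) (L : list A) (P : A -> I -> Prop) :
  (forall a, In a L -> Uf (P a)) -> Uf (fun j => forall a, In a L -> P a j).
Proof.
  induction L as [|a L IH]; intro h.
  - apply (Uup _ _ Ufull). intros j _ a [].
  - assert (h1 : Uf (P a)) by (apply h; left; auto).
    assert (h2 : Uf (fun j => forall a, In a L -> P a j)) by (apply IH; intros; apply h; right; auto).
    apply (Uup _ _ (Uint _ _ h1 h2)). intros j [p q] b [e|hb]; [subst; auto|auto].
Qed.

Lemma ulim_exists (f : I -> R) M : (forall j, 0 <= f j <= M) ->
  exists v, forall eps, 0 < eps -> Uf (fun j => Rabs (f j - v) < eps).
Proof.
  intro hf.
  set (S := fun r => Uf (fun j => r <= f j)).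
  assert (hb : bound S).
  { exists M. intros r hr. destruct (Upr _ hr) as [j hj]. specialize (hf j). lra. }
  assert (hn : exists r, S r).
  { exists 0. apply (Uup _ _ Ufull). intros j _. apply hf. }
  destruct (completeness S hb hn) as [v [hv1 hv2]].
  exists v. intros eps he.
  assert (A1 : Uf (fun j => v - eps < f j)).
  { destruct (Uultra (fun j => v - eps < f j)) as [h|h]; [exact h|].
    exfalso. assert (v <= v - eps); [|lra].
    apply hv2. intros r hr. destruct (Upr _ (Uint _ _ hr h)) as [j [a b]]. lra. }
  assert (A2 : Uf (fun j => f j < v + eps)).
  { destruct (Uultra (fun j => f j < v + eps)) as [h|h]; [exact h|].
    exfalso. assert (v + eps <= v); [|lra].
    apply hv1. unfold S. apply (Uup _ _ h). intros j hj. lra. }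
  apply (Uup _ _ (Uint _ _ A1 A2)). intros j [a b]. apply Rabs_def1; lra.
Qed.

Lemma ulim_ge (f : I -> R) v c : (forall eps, 0 < eps -> Uf (fun j => Rabs (f j - v) < eps)) ->
  Uf (fun j => c <= f j) -> c <= v.
Proof.
  intros hv hc. destruct (Rle_or_lt c v) as [h|h]; [exact h|].
  destruct (Upr _ (Uint _ _ (hv (c - v) ltac:(lra)) hc)) as [j [a b]].
  apply Rabs_def2 in a. lra.
Qed.

Lemma ulim_le (f : I -> R) v c : (forall eps, 0 < eps -> Uf (fun j => Rabs (f j - v) < eps)) ->
  Uf (fun j => f j <= c) -> v <= c.
Proof.
  intros hv hc. destruct (Rle_or_lt v c) as [h|h]; [exact h|].
  destruct (Upr _ (Uint _ _ (hv (v - c) ltac:(lra)) hc)) as [j [a b]].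
  apply Rabs_def2 in a. lra.
Qed.
End UL.
Open Scope R_scope.

Lemma nat_above (M : R) : exists n : nat, M <= INR n.
Proof.
  destruct (archimed M) as [h1 h2].
  exists (Z.to_nat (up M)).
  destruct (Z.lt_ge_cases (up M) 0) as [hz|hz].
  - apply IZR_lt in hz. pose proof (pos_INR (Z.to_nat (up M))). lra.
  - rewrite INR_IZR_INZ, Z2Nat.id by exact hz. lra.
Qed.

Lemma rpow_nonneg x p : 0 <= rpow x p.
Proof. unfold rpow. destruct Rle_dec; [lra|unfold Rpower; left; apply exp_pos]. Qed.

Lemma rpow_pos_eq x p : 0 < x -> rpow x p = Rpower x p.
Proof. intro h. unfold rpow. destruct Rle_dec; [lra|reflexivity]. Qed.

Lemma rpow_strict p x y : 0 < p -> 0 <= y -> y < x -> rpow y p < rpow x p.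
Proof.
  intros hp hy hyx. rewrite (rpow_pos_eq x) by lra.
  unfold rpow. destruct Rle_dec as [h|h].
  - unfold Rpower. apply exp_pos.
  - unfold Rpower. apply exp_increasing. apply Rmult_lt_compat_l; [lra|].
    apply ln_increasing; lra.
Qed.

Lemma rpow_inv_le p x y : 0 < p -> 0 <= y -> rpow x p <= rpow y p -> x <= y.
Proof.
  intros hp hy h. destruct (Rle_or_lt x y) as [h'|h']; [exact h'|].
  pose proof (rpow_strict p x y hp hy h'). lra.
Qed.

Lemma rpow_mono p x y : 0 < p -> 0 <= x -> x <= y -> rpow x p <= rpow y p.
Proof.
  intros hp hx hxy. destruct hxy as [h|h].
  - left. apply rpow_strict; auto.
  - subst. lra.
Qed.

Definition aw (n : nat) : R := (1/2)^(S n).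

Lemma aw_pos n : 0 < aw n.
Proof. unfold aw. apply pow_lt. lra. Qed.

Definition Kf (p : R) (n : nat) : R := Rpower (rpow (INR n) p / aw n + 1) (1/p).

Lemma Kf_pos p n : 0 < Kf p n.
Proof. unfold Kf, Rpower. apply exp_pos. Qed.

Lemma Kf_spec p n : 0 < p -> rpow (INR n) p <= aw n * rpow (Kf p n) p.
Proof.
  intro hp. rewrite (rpow_pos_eq (Kf p n)) by apply Kf_pos. unfold Kf.
  rewrite Rpower_mult.
  replace (1 / p * p) with 1 by (field; lra).
  pose proof (aw_pos n). pose proof (rpow_nonneg (INR n) p).
  rewrite Rpower_1.
  - replace (aw n * (rpow (INR n) p / aw n + 1)) with (rpow (INR n) p + aw n) by (field; lra). lra.
  - assert (0 <= rpow (INR n) p / aw n) by (unfold Rdiv; apply Rmult_le_pos; [lra|left; apply Rinv_0_lt_compat; lra]). lra.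
Qed.

Fixpoint ssum (h : nat -> R) (N : nat) : R :=
  match N with O => 0 | S n => ssum h n + h n end.

Lemma ssum_upper (g : nat -> R) G N : (forall n, 0 <= g n <= G) ->
  ssum (fun n => aw n * g n) N <= (1 - (1/2)^N) * G.
Proof.
  intro hg. induction N as [|N IH]; simpl.
  - lra.
  - replace (aw N) with (1/2 * (1/2)^N) by reflexivity.
    replace ((1/2)^(S N)) with (1/2 * (1/2)^N) by reflexivity.
    destruct (hg N) as [h1 h2].
    assert (0 <= (1/2)^N) by (apply pow_le; lra).
    assert (0 <= (1/2)^N * (G - g N)) by (apply Rmult_le_pos; lra).
    nra.
Qed.

Lemma ssum_nonneg (h : nat -> R) N : (forall n, 0 <= h n) -> 0 <= ssum h N.
Proof. intro hh. induction N; simpl; [lra|]. specialize (hh N). lra. Qed.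

Lemma ssum_lower (h : nat -> R) N n : (forall n, 0 <= h n) -> (n < N)%nat -> h n <= ssum h N.
Proof.
  intros hh hn. induction N as [|N IH]; [lia|]. simpl.
  destruct (Nat.eq_dec n N) as [e|e].
  - subst. pose proof (ssum_nonneg h N hh). lra.
  - assert (n < N)%nat by lia. specialize (IH H). specialize (hh N). lra.
Qed.
Open Scope R_scope.

Lemma fchoice {A B : Type} (P : A -> B -> Prop) : (forall a, exists b, P a b) -> exists f, forall a, P a (f a).
Proof.
  intro h. exists (fun a => proj1_sig (constructive_indefinite_description _ (h a))).
  intro a. apply proj2_sig.
Qed.

Lemma fchoice2 {A B C : Type} (P : A -> B -> C -> Prop) : (forall a b, exists c, P a b c) -> exists f, forall a b, P a b (f a b).
Proof.
  intro h. exists (fun a b => proj1_sig (constructive_indefinite_description _ (h a b))).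
  intros a b. apply proj2_sig.
Qed.

Theorem mainTheorem7 (X : Type) (d : X -> X -> R) (o : X) (p : R)
  (F : (X -> Prop) -> (X -> X -> R) -> Prop) (rho_plus T : R -> R) :
  is_metric d ->
  0 < p ->
  sheaf_of_metrics F ->
  p_admissible p F ->
  incr_unbounded rho_plus ->
  (forall K, 0 <= K -> 0 <= T K) ->
  (forall U : X -> Prop, finite_set U -> U o ->
     forall K, 0 < K ->
       exists s, F U s /\
         (forall x y, U x -> U y -> s x y <= rho_plus (d x y)) /\
         (forall x y, U x -> U y -> T K <= d x y -> K <= s x y)) ->
  exists s, F (fun _ : X => True) s /\ coarse d s.
Proof.
  intros Hd Hp HF Hadm Hrho HT Hhyp.
  destruct HF as [Fext [Fmet Fres]].
  destruct Hadm as [Fcone [Flim Fglue]].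
  pose proof Hrho as Hrho'. destruct Hrho' as [rho0 [rhomono rhounb]].
  destruct Hd as [d0 [dsym [dtri dzero]]].
  set (V := fun (i : (list X * nat)%type) (x : X) => x = o \/ In x (fst i)).
  assert (rhod : forall x y, 0 <= rho_plus (d x y)) by (intros; apply rho0; apply d0).
  assert (Hsg : forall (i : (list X * nat)%type) (n : nat), exists s, F (V i) s /\
     (forall x y, V i x -> V i y -> s x y <= rho_plus (d x y)) /\
     (forall x y, V i x -> V i y -> T (Kf p n) <= d x y -> Kf p n <= s x y)).
  { intros i n. apply Hhyp.
    - exists (o :: fst i). intros x [h|h]; [left; auto|right; auto].
    - left; reflexivity.
    - apply Kf_pos. }
  destruct (fchoice2 _ Hsg) as [sg sgP].
  assert (Hcomb : forall i N, exists s, F (V i) s /\ forall x y, V i x -> V i y ->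
      rpow (s x y) p = ssum (fun n => aw n * rpow (sg i n x y) p) N).
  { intros i N. induction N as [|N [s [hs1 hs2]]].
    - destruct (Fcone (V i) (sg i 0%nat) (sg i 0%nat) 0 0) as [s [h1 h2]];
        try lra; try apply sgP.
      exists s. split; auto. intros x y hx hy. rewrite h2 by auto. simpl. ring.
    - destruct (Fcone (V i) s (sg i N) 1 (aw N) hs1) as [s' [h1 h2]];
        [apply sgP|lra|left; apply aw_pos|].
      exists s'. split; auto. intros x y hx hy. rewrite h2, hs2 by auto. simpl. ring. }
  assert (Hidx : forall i, exists s, F (V i) s /\ (forall x y, V i x -> V i y -> 0 <= s x y) /\
     (forall x y, V i x -> V i y -> s x y <= rho_plus (d x y)) /\
     (forall n x y, (n < snd i)%nat -> V i x -> V i y -> T (Kf p n) <= d x y -> INR n <= s x y)).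
  { intros i. destruct (Hcomb i (snd i)) as [s [hs1 hs2]]. exists s.
    destruct (Fmet _ _ hs1) as [m0 _].
    split; [exact hs1|]. split; [exact m0|]. split.
    - intros x y hx hy. apply (rpow_inv_le p); auto. rewrite hs2 by auto.
      eapply Rle_trans.
      + apply (ssum_upper (fun n => rpow (sg i n x y) p) (rpow (rho_plus (d x y)) p)).
        intro n. destruct (sgP i n) as [h1 [h2 _]]. destruct (Fmet _ _ h1) as [m0' _].
        split; [apply rpow_nonneg|]. apply rpow_mono; auto.
      + pose proof (rpow_nonneg (rho_plus (d x y)) p).
        assert (0 <= (1/2)^(snd i)) by (apply pow_le; lra).
        assert (0 <= (1/2)^(snd i) * rpow (rho_plus (d x y)) p) by (apply Rmult_le_pos; lra).
        lra.
    - intros n x y hn hx hy hT. apply (rpow_inv_le p); auto. rewrite hs2 by auto.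
      eapply Rle_trans; [apply (Kf_spec p n Hp)|].
      eapply Rle_trans; [|apply (ssum_lower _ _ n); [|exact hn]].
      + apply Rmult_le_compat_l; [left; apply aw_pos|]. apply rpow_mono; auto.
        left; apply Kf_pos. apply (proj2 (proj2 (sgP i n))); auto.
      + intro m. apply Rmult_le_pos; [left; apply aw_pos|apply rpow_nonneg]. }
  destruct (fchoice _ Hidx) as [sig sP].
  set (le := fun i j : (list X * nat)%type => incl (fst i) (fst j) /\ (snd i <= snd j)%nat).
  destruct (ultra_exists _ le (nil, 0%nat)) as [Uf [[Uup [Uint [Upr Ut]]] Uultra]].
  { intro i. split; [apply incl_refl|lia]. }
  { intros i1 i2. exists (fst i1 ++ fst i2, max (snd i1) (snd i2)).
    intros j [hl hn]. simpl in hl, hn. split; split.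
    - intros x hx. apply hl. apply in_or_app; auto.
    - lia.
    - intros x hx. apply hl. apply in_or_app; auto.
    - lia. }
  assert (Ufull : Uf (fun _ => True)) by (apply Ut; exists (nil, 0%nat); auto).
  set (g := fun j x y => Rmax 0 (Rmin (sig j x y) (rho_plus (d x y)))).
  assert (gb : forall j x y, 0 <= g j x y <= rho_plus (d x y)).
  { intros j x y. unfold g, Rmax, Rmin. specialize (rhod x y).
    repeat destruct Rle_dec; lra. }
  assert (geq : forall j x y, V j x -> V j y -> g j x y = sig j x y).
  { intros j x y hx hy. destruct (sP j) as [_ [h0 [h1 _]]].
    specialize (h0 x y hx hy). specialize (h1 x y hx hy).
    unfold g, Rmax, Rmin. repeat destruct Rle_dec; lra. }
  assert (Hv : forall x y, exists v, forall eps, 0 < eps -> Uf (fun j => Rabs (g j x y - v) < eps)).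
  { intros x y. apply (ulim_exists _ Uf Uup Uint Upr Ufull Uultra (fun j => g j x y) (rho_plus (d x y))).
    intro j. apply gb. }
  destruct (fchoice2 _ Hv) as [v vP].
  assert (FV : forall i, F (V i) v).
  { intro i.
    assert (hseq : forall m : nat, exists j, le i j /\ forall x y, V i x -> V i y ->
                     Rabs (g j x y - v x y) < / (INR m + 1)).
    { intro m. set (L := o :: fst i).
      assert (hU : Uf (fun j => forall x, In x L -> forall y, In y L ->
                       Rabs (g j x y - v x y) < / (INR m + 1))).
      { apply (Uf_all_list _ Uf Uup Uint Ufull). intros x _.
        apply (Uf_all_list _ Uf Uup Uint Ufull). intros y _.
        apply vP. apply Rinv_0_lt_compat. pose proof (pos_INR m); lra. }
      assert (ht : Uf (fun j => le i j)) by (apply Ut; exists i; auto).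
      destruct (Upr _ (Uint _ _ hU ht)) as [j [h1 h2]]. exists j. split; auto.
      intros x y hx hy. apply h1.
      - destruct hx as [hx|hx]; [left; auto|right; auto].
      - destruct hy as [hy|hy]; [left; auto|right; auto]. }
    destruct (fchoice _ hseq) as [jm hjm].
    apply (Flim (V i) (fun m => sig (jm m)) v).
    - intro m. destruct (hjm m) as [[hl hn] _].
      apply (Fres (V (jm m))).
      + intros x [h|h]; [left; auto|right; apply hl; auto].
      + apply sP.
    - intros x y hx hy eps he. destruct (nat_above (/ eps)) as [N hN]. exists N.
      intros m hm. unfold Rdist.
      destruct (hjm m) as [[hl hn] hc]. specialize (hc x y hx hy).
      assert (hx' : V (jm m) x) by (destruct hx as [h|h]; [left; auto|right; apply hl; auto]).
      assert (hy' : V (jm m) y) by (destruct hy as [h|h]; [left; auto|right; apply hl; auto]).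
      rewrite geq in hc by auto.
      eapply Rlt_le_trans; [exact hc|].
      apply le_INR in hm.
      assert (hinv : 0 < / eps) by (apply Rinv_0_lt_compat; lra).
      apply Rle_trans with (/ / eps).
      + apply Rinv_le_contravar; [exact hinv|lra].
      + rewrite Rinv_inv. lra. }
  destruct (Fglue (fun _ => True) _ V (fun _ => v)) as [s [hs1 hs2]].
  - constructor; exact (nil, 0%nat).
  - intro i. exists (o :: fst i). intros x [h|h]; [left; auto|right; auto].
  - intros i x _; exact I.
  - intros x _. exists ((x :: nil), 0%nat). right; left; auto.
  - intros i j. exists (fst i ++ fst j, max (snd i) (snd j)).
    split; intros x [h|h]; try (left; exact h); right; apply in_or_app; auto.
  - exact FV.
  - intros; reflexivity.
  - assert (FX : F (fun _ => True) v).
    { apply (Fext _ s v hs1). intros x y _ _.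
      apply (hs2 ((x :: y :: nil), 0%nat)); right; simpl; auto. }
    exists v. split; [exact FX|].
    assert (vlow : forall n x y, T (Kf p n) <= d x y -> INR n <= v x y).
    { intros n x y hT. apply (ulim_ge _ Uf Uint Upr (fun j => g j x y)); [apply vP|].
      apply Ut. exists ((x :: y :: nil), S n). intros j [hl hn]. simpl in hl, hn.
      assert (hx : V j x) by (right; apply hl; simpl; auto).
      assert (hy : V j y) by (right; apply hl; simpl; auto).
      rewrite geq by auto. destruct (sP j) as [_ [_ [_ h]]]. apply h; auto; lia. }
    assert (vnn : forall x y, 0 <= v x y).
    { intros x y. apply (ulim_ge _ Uf Uint Upr (fun j => g j x y)); [apply vP|].
      apply (Uup _ _ Ufull). intros j _. apply gb. }
    assert (vup : forall x y, v x y <= rho_plus (d x y)).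
    { intros x y. apply (ulim_le _ Uf Uint Upr (fun j => g j x y)); [apply vP|].
      apply (Uup _ _ Ufull). intros j _. apply gb. }
    set (term := fun (n : nat) (t : R) =>
       if Rle_dec (T (Kf p n)) t then (if Rle_dec (INR n) t then INR n else 0) else 0).
    assert (term_nn : forall n t, 0 <= term n t).
    { intros n t. unfold term. pose proof (pos_INR n). repeat destruct Rle_dec; lra. }
    assert (term_mono : forall n s t, s <= t -> term n s <= term n t).
    { intros n s0 t h. unfold term. pose proof (pos_INR n). repeat destruct Rle_dec; lra. }
    assert (hlub : forall t, exists m, is_lub (fun r => exists n, r = term n t) m).
    { intro t.
      assert (hb : bound (fun r => exists n, r = term n t)).
      { exists (Rmax t 0). intros r [n ->]. unfold term.
        pose proof (Rmax_l t 0). pose proof (Rmax_r t 0).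
        repeat destruct Rle_dec; lra. }
      assert (hn : exists r, (fun r => exists n, r = term n t) r).
      { exists (term 0%nat t). exists 0%nat. reflexivity. }
      destruct (completeness _ hb hn) as [m hm]. exists m; exact hm. }
    destruct (fchoice _ hlub) as [rm rmP].
    exists rm, rho_plus. split; [|split; [exact Hrho|]].
    + split; [|split].
      * intros t _. apply Rle_trans with (term 0%nat t); [apply term_nn|].
        apply (proj1 (rmP t)). exists 0%nat; reflexivity.
      * intros s0 t _ h. apply (proj2 (rmP s0)). intros r [n ->].
        apply Rle_trans with (term n t); [apply term_mono; exact h|].
        apply (proj1 (rmP t)). exists n; reflexivity.
      * intro M. destruct (nat_above M) as [n hn].
        exists (Rmax (T (Kf p n)) (INR n)).
        pose proof (Rmax_l (T (Kf p n)) (INR n)). pose proof (Rmax_r (T (Kf p n)) (INR n)).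
        pose proof (pos_INR n).
        split; [lra|].
        apply Rle_trans with (term n (Rmax (T (Kf p n)) (INR n))).
        -- unfold term. repeat destruct Rle_dec; lra.
        -- apply (proj1 (rmP _)). exists n; reflexivity.
    + intros x y. split; [|apply vup].
      apply (proj2 (rmP _)). intros r [n ->]. unfold term.
      repeat destruct Rle_dec; try apply vnn. apply vlow; auto.
Qed.
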